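(* Let $\nu\ge0$, $K>\nu+1$, and let $r>0$ satisfy $r=\Psi_\nu(2Kr)$, where $\Psi_\nu(x)=I_{\nu+1}(x)/I_\nu(x)$. Then $$r<\sqrt{1-\frac{1}{2K}}.$$
   Context: $I_\nu$ denotes the modified Bessel function of the first kind of order $\nu$. *)

(* Defs.v *)
From Stdlib Require Import Reals.
From Coquelicot Require Import Coquelicot.
Open Scope R_scope.

Definition Gamma (s : R) : R :=
  RInt_gen (fun t => Rpower t (s - 1) * exp (- t)) (at_right 0) (Rbar_locally p_infty).

Definition BesselI (nu x : R) : R :=
  Series (fun k : nat =>
    Rpower (x / 2) (2 * INR k + nu) / (INR (Stdlib.Arith.Factorial.fact k) * Gamma (INR k + nu + 1))).

Definition Psi (nu x : R) : R := BesselI (nu + 1) x / BesselI nu x.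

(* Main.v *)
Require Import Defs.
From Stdlib Require Import Reals.
From Coquelicot Require Import Coquelicot.
Open Scope R_scope.
From Stdlib Require Import Lra Lia Factorial ZArith.
Definition gf (s t : R) := Rpower t (s - 1) * exp (- t).

Lemma is_derive_Rpower p t : 0 < t -> is_derive (fun x => Rpower x p) t (p * Rpower t (p - 1)).
Proof. intros Ht. apply is_derive_Reals. now apply derivable_pt_lim_power. Qed.

Lemma Rpower_pos t p : 0 < Rpower t p.
Proof. unfold Rpower. apply exp_pos. Qed.

Lemma exp_ge_pow t N : 0 <= t -> t ^ N / INR (fact N) <= exp t.
Proof.
  intros Ht. eapply Rle_trans; [|apply (exp_ge_taylor t N Ht)].
  destruct N as [|m].
  - simpl. lra.
  - rewrite tech5. set (f := fun k => t ^ k / INR (fact k)).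
    assert (0 <= sum_f_R0 f m). { apply cond_pos_sum. intros k. unfold f.
      apply Rmult_le_pos. apply pow_le; lra. left; apply Rinv_0_lt_compat, lt_0_INR, lt_O_fact. }
    unfold f in *. lra.
Qed.

Lemma exists_nat_ge (x : R) : exists N : nat, x <= INR N.
Proof.
  destruct (archimed x) as [H1 H2].
  destruct (Z_lt_le_dec (up x) 0) as [Hz|Hz].
  - exists 0%nat. simpl. apply IZR_lt in Hz. lra.
  - exists (Z.to_nat (up x)). rewrite INR_IZR_INZ, Z2Nat.id by lia. lra.
Qed.

Lemma gf_bound_large p : 0 <= p -> exists C, 0 < C /\
  forall t, 1 <= t -> 0 <= Rpower t p * exp (- t) <= C / t ^ 2.
Proof.
  intros Hp. destruct (exists_nat_ge (p + 2)) as [N HN].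
  exists (INR (fact N)). split. apply lt_0_INR, lt_O_fact.
  intros t Ht. split.
  - apply Rmult_le_pos; left; [apply Rpower_pos | apply exp_pos].
  - assert (H1 : Rpower t p <= t ^ N / t ^ 2).
    { replace (t ^ N / t ^ 2) with (Rpower t (INR N - 2)).
      apply Rle_Rpower; lra.
      rewrite <- !Rpower_pow by lra.
      assert (E : Rpower t (INR N) = Rpower t (INR N - 2) * Rpower t (INR 2)).
      { rewrite <- Rpower_plus. f_equal. simpl. lra. }
      rewrite E. field. apply Rgt_not_eq, Rpower_pos. }
    assert (H2 : exp (- t) <= INR (fact N) / t ^ N).
    { rewrite exp_Ropp. pose proof (exp_ge_pow t N ltac:(lra)).
      assert (0 < t ^ N) by (apply pow_lt; lra).
      assert (0 < INR (fact N)) by (apply lt_0_INR, lt_O_fact).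
      apply (Rmult_le_reg_l (exp t)). apply exp_pos.
      rewrite Rinv_r by (apply Rgt_not_eq, exp_pos).
      apply (Rmult_le_reg_r (t ^ N / INR (fact N))).
      apply Rdiv_lt_0_compat; lra.
      replace (exp t * (INR (fact N) / t ^ N) * (t ^ N / INR (fact N))) with (exp t) by (field; lra).
      lra. }
    assert (0 < t ^ N) by (apply pow_lt; lra).
    assert (0 < t ^ 2) by (apply pow_lt; lra).
    eapply Rle_trans. apply Rmult_le_compat; try (left; first [apply Rpower_pos | apply exp_pos]); eassumption.
    apply Req_le. field. split; lra.
Qed.


Lemma exp_le_mono a b : a <= b -> exp a <= exp b.
Proof. intros H. destruct (Rle_lt_or_eq_dec _ _ H) as [H1|H1]. left; now apply exp_increasing. now subst. Qed.

Lemma ln_nonpos t : 0 < t <= 1 -> ln t <= 0.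
Proof. intros Ht. rewrite <- ln_1. apply ln_le; lra. Qed.

Lemma Rpower_le_1 t p : 0 < t <= 1 -> 0 <= p -> Rpower t p <= 1.
Proof.
  intros Ht Hp. unfold Rpower. rewrite <- exp_0. apply exp_le_mono.
  pose proof (ln_nonpos t Ht). nra.
Qed.

Lemma Rpower_le_id t p : 0 < t <= 1 -> 1 <= p -> Rpower t p <= t.
Proof.
  intros Ht Hp. unfold Rpower. rewrite <- (exp_ln t) at 2 by lra. apply exp_le_mono.
  pose proof (ln_nonpos t Ht). nra.
Qed.

Lemma locally_pos x : 0 < x -> locally x (fun y => 0 < y).
Proof. intros Hx. apply (locally_open (fun u => 0 < u)). apply open_gt. auto. exact Hx. Qed.

Lemma is_derive_pe p t : 0 < t ->
  is_derive (fun x => Rpower x p * exp (- x)) t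
    (p * Rpower t (p - 1) * exp (- t) - Rpower t p * exp (- t)).
Proof.
  intros Ht.
  assert (H1 := is_derive_Rpower p t Ht).
  assert (H2 : is_derive (fun x => exp (- x)) t (- exp (- t))).
  { auto_derive; auto. ring. }
  assert (H := is_derive_mult _ _ _ _ _ H1 H2 (fun n m => Rmult_comm n m)).
  replace (p * Rpower t (p - 1) * exp (- t) - Rpower t p * exp (- t)) with
    (plus (mult (p * Rpower t (p - 1)) (exp (- t))) (mult (Rpower t p) (- exp (- t))))
    by (unfold plus, mult; simpl; ring).
  exact H.
Qed.

Lemma gf_continuous s t : 0 < t -> continuous (gf s) t.
Proof.
  intros Ht. apply (@ex_derive_continuous R_AbsRing R_NormedModule). eexists. unfold gf. apply is_derive_pe; auto.
Qed.

Lemma gf_ex_RInt s a b : 0 < a -> 0 < b -> ex_RInt (gf s) a b.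
Proof.
  intros Ha Hb. apply (@ex_RInt_continuous R_CompleteNormedModule). intros z Hz. apply gf_continuous.
  assert (0 < Rmin a b) by (apply Rmin_case; auto). lra.
Qed.


Lemma gf_small s t : 1 <= s -> 0 < t <= 1 -> Rabs (gf s t) <= 1.
Proof.
  intros Hs Ht. unfold gf. rewrite Rabs_pos_eq.
  2: { apply Rmult_le_pos; left; [apply Rpower_pos|apply exp_pos]. }
  rewrite <- (Rmult_1_r 1). apply Rmult_le_compat; try (left; first [apply Rpower_pos|apply exp_pos]).
  apply Rpower_le_1; lra. rewrite <- exp_0. apply exp_le_mono. lra.
Qed.

Lemma int_inv2 C u v : 0 < u -> 0 < v -> is_RInt (fun t => C / t ^ 2) u v (C / u - C / v).
Proof.
  intros Hu Hv.
  assert (Hm : 0 < Rmin u v) by (apply Rmin_case; auto).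
  replace (C / u - C / v) with (minus ((fun t => - C / t) v) ((fun t => - C / t) u))
    by (unfold minus, plus, opp; simpl; field; lra).
  apply (@is_RInt_derive R_CompleteNormedModule).
  - intros x Hx. assert (0 < x) by lra. auto_derive. lra. simpl. field. lra.
  - intros x Hx. assert (0 < x) by lra.
    apply (@ex_derive_continuous R_AbsRing R_NormedModule). auto_derive. rewrite Rmult_1_r. apply Rgt_not_eq. nra.
Qed.

Lemma ball_R (x y e : R) : ball x e y <-> Rabs (y - x) < e.
Proof. reflexivity. Qed.

Lemma Gamma_ex s : 1 <= s -> exists l, is_RInt_gen (gf s) (at_right 0) (Rbar_locally p_infty) l.
Proof.
  intros Hs.
  set (F := fun t => RInt (gf s) 1 t).
  assert (HF : forall t, 0 < t -> is_derive F t (gf s t)).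
  { intros t Ht. apply (is_derive_RInt (gf s) F 1 t).
    - apply filter_imp with (fun y => 0 < y). intros y Hy. apply (@RInt_correct R_CompleteNormedModule), gf_ex_RInt; lra.
      apply locally_pos; auto.
    - apply gf_continuous; auto. }
  assert (Hchas : forall u v, 0 < u -> 0 < v -> F v - F u = RInt (gf s) u v).
  { intros u v Hu Hv. unfold F. rewrite <- (RInt_Chasles (gf s) 1 u v) by (apply gf_ex_RInt; lra).
    unfold plus; simpl. ring. }
  assert (Hsw : forall u v, 0 < u -> 0 < v -> Rabs (RInt (gf s) u v) = Rabs (RInt (gf s) v u)).
  { intros u v Hu Hv. rewrite <- (opp_RInt_swap (gf s) v u) by (apply gf_ex_RInt; lra).
    unfold opp; simpl. apply Rabs_Ropp. }
  destruct (proj1 (filterlim_locally_cauchy (F := at_right 0) F)) as [la Hla].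
  { intros eps.
    assert (Hm: 0 < Rmin 1 eps) by (apply Rmin_case; [lra | apply cond_pos]).
    exists (fun u => 0 < u < Rmin 1 eps). split.
    - exists (mkposreal _ Hm). intros y Hy Hy0. assert (H0 : Rabs (y - 0) < Rmin 1 eps) by exact Hy.
      rewrite Rminus_0_r, Rabs_pos_eq in H0 by lra. lra.
    - assert (Hmin1 := Rmin_l 1 eps). assert (Hmin2 := Rmin_r 1 eps).
      assert (K : forall u v, 0 < u < Rmin 1 eps -> 0 < v < Rmin 1 eps -> u <= v ->
                Rabs (RInt (gf s) u v) < eps).
      { intros u v Hu Hv Huv. eapply Rle_lt_trans.
        apply abs_RInt_le_const with (M := 1). auto. apply gf_ex_RInt; lra.
        intros t Ht. apply gf_small; lra. lra. }
      intros u v Hu Hv. apply ball_R. rewrite Hchas by lra.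
      destruct (Rle_dec u v). apply K; auto. rewrite Hsw by lra. apply K; auto; lra. }
  destruct (gf_bound_large (s - 1)) as [C [HC HCb]]. lra.
  destruct (proj1 (filterlim_locally_cauchy (F := Rbar_locally p_infty) F)) as [lb Hlb].
  { intros eps.
    set (B := Rmax 1 (2 * C / eps)).
    assert (HB1 : 1 <= B) by apply Rmax_l.
    assert (HB2 : 2 * C / eps <= B) by apply Rmax_r.
    assert (He := cond_pos eps).
    exists (fun u => B < u). split.
    - exists B. auto.
    - assert (K : forall u v, B < u -> B < v -> u <= v -> Rabs (RInt (gf s) u v) < eps).
      { intros u v Hu Hv Huv.
        assert (I1 : 0 <= RInt (gf s) u v).
        { apply RInt_ge_0; auto. apply gf_ex_RInt; lra. intros x Hx. apply (HCb x). lra. }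
        assert (I2 : RInt (gf s) u v <= C / u - C / v).
        { rewrite <- (is_RInt_unique _ _ _ _ (int_inv2 C u v ltac:(lra) ltac:(lra))).
          apply RInt_le; auto. apply gf_ex_RInt; lra.
          eexists; apply int_inv2; lra.
          intros x Hx. apply (HCb x). lra. }
        assert (I3 : C / u < eps).
        { apply (Rmult_lt_reg_r u). lra. unfold Rdiv. rewrite Rmult_assoc, Rinv_l by lra.
          apply (Rmult_le_compat_r eps) in HB2; [|lra].
          unfold Rdiv in HB2. rewrite Rmult_assoc, Rinv_l in HB2 by lra. nra. }
        assert (0 < C / v) by (apply Rdiv_lt_0_compat; lra).
        rewrite Rabs_pos_eq by auto. lra. }
      intros u v Hu Hv. apply ball_R. rewrite Hchas by lra.
      destruct (Rle_dec u v). apply K; auto. rewrite Hsw by lra. apply K; auto; lra. }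
  exists (lb - la).
  assert (HD : is_RInt_gen (Derive F) (at_right 0) (Rbar_locally p_infty) (lb - la)).
  { apply is_RInt_gen_Derive; auto.
    - apply Filter_prod with (fun a => 0 < a) (fun b => 0 < b).
      + exists (mkposreal 1 Rlt_0_1). intros y _ Hy. auto.
      + exists 0. auto.
      + intros a b Ha Hb x Hx. simpl in Hx. eexists. apply HF.
        assert (0 < Rmin a b) by (apply Rmin_case; auto). lra.
    - apply Filter_prod with (fun a => 0 < a) (fun b => 0 < b).
      + exists (mkposreal 1 Rlt_0_1). intros y _ Hy. auto.
      + exists 0. auto.
      + intros a b Ha Hb x Hx. simpl in Hx.
        assert (0 < x) by (assert (0 < Rmin a b) by (apply Rmin_case; auto); lra).
        apply continuous_ext_loc with (gf s).
        * apply filter_imp with (fun y => 0 < y). intros y Hy. symmetry. apply is_derive_unique, HF; auto.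
          apply locally_pos; auto.
        * apply gf_continuous; auto. }
  eapply is_RInt_gen_ext; [| exact HD].
  apply Filter_prod with (fun a => 0 < a) (fun b => 0 < b).
  + exists (mkposreal 1 Rlt_0_1). intros y _ Hy. auto.
  + exists 0. auto.
  + intros a b Ha Hb x Hx. simpl in Hx.
    assert (0 < x) by (assert (0 < Rmin a b) by (apply Rmin_case; auto); lra).
    apply is_derive_unique, HF; auto.
Qed.

Lemma Gamma_rec s l : 1 <= s ->
  is_RInt_gen (gf s) (at_right 0) (Rbar_locally p_infty) l ->
  is_RInt_gen (gf (s + 1)) (at_right 0) (Rbar_locally p_infty) (s * l).
Proof.
  intros Hs Hl.
  set (G := fun t => - (Rpower t s * exp (- t))).
  assert (HG : forall t, 0 < t -> is_derive G t (- (s * Rpower t (s - 1) * exp (- t) - Rpower t s * exp (- t)))).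
  { intros t Ht. unfold G. apply (@is_derive_opp R_AbsRing R_NormedModule (fun t => Rpower t s * exp (- t))).
    apply is_derive_pe; auto. }
  assert (HD : is_RInt_gen (Derive G) (at_right 0) (Rbar_locally p_infty) (0 - 0)).
  { apply is_RInt_gen_Derive.
    - apply Filter_prod with (fun a => 0 < a) (fun b => 0 < b).
      + exists (mkposreal 1 Rlt_0_1). intros y _ Hy. auto.
      + exists 0. auto.
      + intros a b Ha Hb x Hx. simpl in Hx. eexists. apply HG.
        assert (0 < Rmin a b) by (apply Rmin_case; auto). lra.
    - apply Filter_prod with (fun a => 0 < a) (fun b => 0 < b).
      + exists (mkposreal 1 Rlt_0_1). intros y _ Hy. auto.
      + exists 0. auto.
      + intros a b Ha Hb x Hx. simpl in Hx.
        assert (0 < x) by (assert (0 < Rmin a b) by (apply Rmin_case; auto); lra).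
        apply continuous_ext_loc with (fun t => - (s * Rpower t (s - 1) * exp (- t) - Rpower t s * exp (- t))).
        * apply filter_imp with (fun y => 0 < y). intros y Hy. symmetry. apply is_derive_unique, HG; auto.
          apply locally_pos; auto.
        * apply (@ex_derive_continuous R_AbsRing R_NormedModule).
          assert (E : forall t, - (s * Rpower t (s - 1) * exp (- t) - Rpower t s * exp (- t)) =
                        Rpower t s * exp (- t) + (- s) * (Rpower t (s - 1) * exp (- t))) by (intros; ring).
          eapply ex_derive_ext. intros t. symmetry. apply E.
          apply (@ex_derive_plus R_AbsRing R_NormedModule (fun t => Rpower t s * exp (- t))
             (fun t => (- s) * (Rpower t (s - 1) * exp (- t)))).
          eexists; apply is_derive_pe; auto.
          apply (ex_derive_scal (fun t => Rpower t (s - 1) * exp (- t))).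
          eexists; apply is_derive_pe; auto.
    - apply filterlim_locally. intros eps.
      assert (Hm: 0 < Rmin 1 eps) by (apply Rmin_case; [lra | apply cond_pos]).
      exists (mkposreal _ Hm). intros y Hy Hy0.
      assert (H0 : Rabs (y - 0) < Rmin 1 eps) by exact Hy.
      rewrite Rminus_0_r, Rabs_pos_eq in H0 by lra.
      assert (Hmin1 := Rmin_l 1 eps). assert (Hmin2 := Rmin_r 1 eps).
      change (Rabs (G y - 0) < eps). unfold G. rewrite Rminus_0_r, Rabs_Ropp.
      rewrite Rabs_pos_eq by (apply Rmult_le_pos; left; [apply Rpower_pos|apply exp_pos]).
      assert (Rpower y s <= y) by (apply Rpower_le_id; lra).
      assert (exp (- y) <= 1) by (rewrite <- exp_0; apply exp_le_mono; lra).
      assert (0 < Rpower y s) by apply Rpower_pos.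
      assert (0 < exp (- y)) by apply exp_pos. nra.
    - destruct (gf_bound_large s) as [C [HC HCb]]. lra.
      apply filterlim_locally. intros eps.
      assert (He := cond_pos eps).
      exists (Rmax 1 (C / eps)). intros y Hy.
      assert (HB1 := Rmax_l 1 (C / eps)). assert (HB2 := Rmax_r 1 (C / eps)).
      change (Rabs (G y - 0) < eps). unfold G. rewrite Rminus_0_r, Rabs_Ropp.
      destruct (HCb y) as [H1 H2]. lra.
      rewrite Rabs_pos_eq by auto.
      eapply Rle_lt_trans. exact H2.
      assert (C / eps < y) by lra.
      apply (Rmult_lt_reg_r (y ^ 2)). apply pow_lt; lra.
      unfold Rdiv. rewrite Rmult_assoc, Rinv_l by (apply pow_nonzero; lra).
      apply (Rmult_lt_compat_r eps) in H; [|lra]. unfold Rdiv in H.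
      rewrite Rmult_assoc, Rinv_l in H by lra. simpl. nra. }
  assert (HS := is_RInt_gen_scal (Fa := at_right 0) (Fb := Rbar_locally p_infty) (gf s) s l Hl).
  assert (HP := is_RInt_gen_plus (Fa := at_right 0) (Fb := Rbar_locally p_infty) _ _ _ _ HD HS).
  replace (s * l) with (plus (0 - 0) (scal s l)) by (unfold plus, scal; simpl; unfold mult; simpl; ring).
  eapply is_RInt_gen_ext; [| exact HP].
  apply Filter_prod with (fun a => 0 < a) (fun b => 0 < b).
  + exists (mkposreal 1 Rlt_0_1). intros y _ Hy. auto.
  + exists 0. auto.
  + intros a b Ha Hb x Hx. simpl in Hx.
    assert (0 < x) by (assert (0 < Rmin a b) by (apply Rmin_case; auto); lra).
    rewrite (is_derive_unique _ _ _ (HG x H)). unfold plus, scal; simpl; unfold mult; simpl.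
    unfold gf. replace (s + 1 - 1) with s by ring. ring.
Qed.
Lemma tele (v w : nat -> R) n : v 0%nat = 0 -> w n = 0 ->
  (forall j, (j < n)%nat -> v (S j) = w j) -> sum_f_R0 v n = sum_f_R0 w n.
Proof.
  intros Hv Hw Hvw. destruct n as [|m].
  - simpl. lra.
  - rewrite decomp_sum by lia. rewrite tech5. simpl Init.Nat.pred.
    rewrite (sum_eq (fun i => v (S i)) w m). lra.
    intros i Hi. apply Hvw. lia.
Qed.

Lemma sum_scal_l c f n : sum_f_R0 (fun j => c * f j) n = c * sum_f_R0 f n.
Proof. rewrite scal_sum. apply sum_eq. intros; ring. Qed.

Definition Fk (nu J K : R) := K * (K + nu) - J * K - J / 2.

Lemma urec nu y (a : nat -> R)
  (Hrec : forall k, a (S k) * ((INR k + 1) * (INR k + nu + 1)) = y ^ 2 * a k) n j :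
  (j < n)%nat ->
  a (S j) * a (n - S j)%nat * ((INR j + 1) * (INR j + 1 + nu)) =
  a j * a (n - j)%nat * ((INR n - INR j) * (INR n - INR j + nu)).
Proof.
  intros Hj. set (m := (n - S j)%nat).
  assert (E1 : (n - j)%nat = S m) by (unfold m; lia).
  assert (E2 : INR n - INR j = INR m + 1).
  { rewrite <- minus_INR by lia. rewrite E1, S_INR. ring. }
  rewrite E1, E2.
  pose proof (Hrec j) as H1. pose proof (Hrec m) as H2.
  transitivity (y ^ 2 * a j * a m). rewrite <- H1. ring.
  replace (y ^ 2 * a j * a m) with (a j * (y ^ 2 * a m)) by ring. rewrite <- H2. ring.
Qed.

Lemma ident_h nu y (a : nat -> R)
  (Hrec : forall k, a (S k) * ((INR k + 1) * (INR k + nu + 1)) = y ^ 2 * a k) n (h : R -> R) :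
  sum_f_R0 (fun j => a j * a (n - j)%nat *
     (INR j * (INR j + nu) * h (INR j - 1) - (INR n - INR j) * (INR n - INR j + nu) * h (INR j))) n = 0.
Proof.
  rewrite (sum_eq _ (fun j => a j * a (n - j)%nat * (INR j * (INR j + nu) * h (INR j - 1))
     - a j * a (n - j)%nat * ((INR n - INR j) * (INR n - INR j + nu) * h (INR j)))).
  2: { intros; ring. }
  rewrite minus_sum.
  rewrite (tele (fun j => a j * a (n - j)%nat * (INR j * (INR j + nu) * h (INR j - 1)))
                (fun j => a j * a (n - j)%nat * ((INR n - INR j) * (INR n - INR j + nu) * h (INR j)))).
  - ring.
  - simpl. ring.
  - replace (INR n - INR n) with 0 by ring. ring.
  - intros j Hj. rewrite S_INR. replace (INR j + 1 - 1) with (INR j) by ring.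
    pose proof (urec nu y a Hrec n j Hj) as U.
    transitivity (a (S j) * a (n - S j)%nat * ((INR j + 1) * (INR j + 1 + nu)) * h (INR j)).
    ring. rewrite U. ring.
Qed.

Lemma dn_nonneg nu y (a : nat -> R) (Hnu : 0 <= nu) (Ha : forall k, 0 < a k)
  (Hrec : forall k, a (S k) * ((INR k + 1) * (INR k + nu + 1)) = y ^ 2 * a k) n :
  0 <= sum_f_R0 (fun j => a j * a (n - j)%nat * Fk nu (INR j) (INR (n - j))) n.
Proof.
  destruct n as [|n'].
  - simpl. unfold Fk. simpl. replace ((0 - 0) * (0 - 0 + nu) - 0 * (0 - 0) - 0 / 2) with 0 by field.
    rewrite Rmult_0_r. lra.
  - set (n := S n').
    set (N := INR n).
    assert (HN : 1 <= N) by (unfold N, n; rewrite S_INR; pose proof (pos_INR n'); lra).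
    set (al := 1 / (2 * N + 2 * nu - 1)).
    set (be := - ((N + nu) / 2 + 1 / 4) / (N + nu)).
    set (rho := N * (nu + nu * N + (nu - 1 / 2) ^ 2) / (2 * N + 2 * nu - 1)).
    pose proof (ident_h nu y a Hrec n (fun t => 1)) as I1.
    pose proof (ident_h nu y a Hrec n (fun t => 2 * t - N + 1)) as I2.
    cbv beta in I1, I2. fold N in I1, I2.
    rewrite (sum_eq _ (fun j =>
       al * (a j * a (n - j)%nat * (INR j * (INR j + nu) * (2 * (INR j - 1) - N + 1) - (N - INR j) * (N - INR j + nu) * (2 * INR j - N + 1)))
     + be * (a j * a (n - j)%nat * (INR j * (INR j + nu) * 1 - (N - INR j) * (N - INR j + nu) * 1))
     + rho * (a j * a (n - j)%nat))).
    2: { intros j Hj. rewrite minus_INR by exact Hj. fold N. unfold Fk, al, be, rho. field; repeat split; intro; lra. }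
    rewrite !plus_sum, !sum_scal_l.
    rewrite I1, I2. rewrite Rmult_0_r, Rmult_0_r, !Rplus_0_l.
    apply Rmult_le_pos.
    - unfold rho. apply Rmult_le_pos. apply Rmult_le_pos. lra.
      assert (0 <= (nu - 1/2)^2) by apply pow2_ge_0. nra.
      left. apply Rinv_0_lt_compat. lra.
    - apply cond_pos_sum. intros k. left. apply Rmult_lt_0_compat; apply Ha.
Qed.

Lemma is_series_minus_R a b la lb : is_series a la -> is_series b lb ->
  is_series (fun n => a n - b n) (la - lb).
Proof.
  intros H1 H2. exact (@is_series_minus R_AbsRing R_NormedModule a b la lb H1 H2).
Qed.

Lemma is_series_scal_R c a l : is_series a l -> is_series (fun n => c * a n) (c * l).
Proof. intros H. exact (@is_series_scal_l R_AbsRing R_NormedModule c a l H). Qed.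

Lemma decr1_R (u : nat -> R) l : u 0%nat = 0 -> is_series (fun k => u (S k)) l -> is_series u l.
Proof.
  intros H0 H. apply is_series_decr_1. rewrite H0. unfold plus, opp. simpl. rewrite Ropp_0, Rplus_0_r. exact H.
Qed.

Lemma series_ge_partial d L N : (forall n, 0 <= d n) -> is_series d L -> sum_f_R0 d N <= L.
Proof.
  intros Hd HL.
  assert (Hm : forall k, sum_f_R0 d N <= sum_f_R0 d (N + k)).
  { induction k. rewrite Nat.add_0_r; lra. rewrite Nat.add_succ_r, tech5. specialize (Hd (S (N + k))); lra. }
  assert (H := is_lim_seq_le_loc (fun _ => sum_f_R0 d N) (sum_n d) (sum_f_R0 d N) L).
  simpl in H. apply H.
  - exists N. intros n Hn. rewrite sum_n_Reals. replace n with (N + (n - N))%nat by lia. apply Hm.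
  - apply is_lim_seq_const.
  - exact HL.
Qed.

Lemma ratio_lim nu y : 0 <= nu ->
  is_lim_seq (fun n => y ^ 2 / ((INR n + 1) * (INR n + nu + 1))) 0.
Proof.
  intros Hnu.
  apply is_lim_seq_le_le_loc with (u := fun _ => 0) (w := fun n => y ^ 2 * / INR n).
  - exists 1%nat. intros n Hn. assert (1 <= INR n) by (apply (le_INR 1); lia).
    split.
    + apply Rmult_le_pos. apply pow2_ge_0. left. apply Rinv_0_lt_compat. nra.
    + unfold Rdiv. apply Rmult_le_compat_l. apply pow2_ge_0.
      apply Rinv_le_contravar. lra. nra.
  - apply is_lim_seq_const.
  - replace (Finite 0) with (Rbar_mult (y ^ 2) (Rbar_inv p_infty)) by (simpl; f_equal; ring).
    apply is_lim_seq_scal_l. apply is_lim_seq_inv. apply is_lim_seq_INR. discriminate.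
Qed.

Lemma main_ineq nu y (a : nat -> R) (Hnu : 0 <= nu) (Hy : 0 < y) (Ha : forall k, 0 < a k)
  (Hrec : forall k, a (S k) * ((INR k + 1) * (INR k + nu + 1)) = y ^ 2 * a k) :
  exists S U, is_series a S /\ is_series (fun k => a k / (INR k + nu + 1)) U /\ 0 < S /\
    y ^ 2 * U ^ 2 + U * S / 2 < S ^ 2.
Proof.
  assert (Hpos : forall k, 0 < (INR k + 1) * (INR k + nu + 1)).
  { intros k. pose proof (pos_INR k). nra. }
  assert (HexA : ex_series a).
  { apply ex_series_Rabs. apply (ex_series_DAlembert a 0). lra.
    intros n. apply Rgt_not_eq, Ha.
    eapply is_lim_seq_ext; [| apply (ratio_lim nu y Hnu)].
    intros n. simpl. pose proof (Hrec n) as H. pose proof (Ha n). pose proof (Ha (S n)).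
    rewrite Rabs_pos_eq. 2: { left; apply Rdiv_lt_0_compat; auto. }
    specialize (Hpos n).
    assert (E : a (S n) = y ^ 2 * a n / ((INR n + 1) * (INR n + nu + 1))) by (rewrite <- H; field; pose proof (pos_INR n); repeat split; apply Rgt_not_eq; nra).
    rewrite E. field. pose proof (pos_INR n); repeat split; apply Rgt_not_eq; nra. }
  assert (HexU : ex_series (fun k => a k / (INR k + nu + 1))).
  { apply (@ex_series_le R_AbsRing R_CompleteNormedModule) with a; auto.
    intros n. change (Rabs (a n / (INR n + nu + 1)) <= a n).
    pose proof (Ha n). pose proof (pos_INR n).
    rewrite Rabs_pos_eq by (left; apply Rdiv_lt_0_compat; lra).
    unfold Rdiv. rewrite <- (Rmult_1_r (a n)) at 2. apply Rmult_le_compat_l. lra.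
    rewrite <- Rinv_1. apply Rinv_le_contravar; lra. }
  set (Sv := Series a). set (Uv := Series (fun k => a k / (INR k + nu + 1))).
  assert (HS : is_series a Sv) by (apply Series_correct; auto).
  assert (HU : is_series (fun k => a k / (INR k + nu + 1)) Uv) by (apply Series_correct; auto).
  assert (HM : is_series (fun k => INR k * a k) (y ^ 2 * Uv)).
  { apply decr1_R. simpl; ring.
    eapply is_series_ext; [| apply (is_series_scal_R (y ^ 2) _ _ HU)].
    intros k. cbv beta. pose proof (Hrec k) as H. specialize (Hpos k). pose proof (pos_INR k).
    assert (E : a (S k) = y ^ 2 * a k / ((INR k + 1) * (INR k + nu + 1))) by (rewrite <- H; field; repeat split; apply Rgt_not_eq; nra).
    change (y ^ 2 * (a k / (INR k + nu + 1)) = INR (S k) * a (S k)).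
    rewrite S_INR, E. field. repeat split; apply Rgt_not_eq; nra. }
  assert (HT : is_series (fun k => INR k * (INR k + nu) * a k) (y ^ 2 * Sv)).
  { apply decr1_R. simpl; ring.
    eapply is_series_ext; [| apply (is_series_scal_R (y ^ 2) _ _ HS)].
    intros k. cbv beta. pose proof (Hrec k) as H.
    change (y ^ 2 * a k = INR (S k) * (INR (S k) + nu) * a (S k)).
    rewrite <- H. rewrite S_INR. ring. }
  assert (Hnn : forall k, 0 <= a k) by (intros k; left; apply Ha).
  assert (HMn : forall k, 0 <= INR k * a k) by (intros k; apply Rmult_le_pos; [apply pos_INR | auto]).
  assert (HTn : forall k, 0 <= INR k * (INR k + nu) * a k).
  { intros k. pose proof (pos_INR k). apply Rmult_le_pos; auto. nra. }
  assert (P1 := is_series_mult_pos _ _ _ _ HS HT Hnn HTn).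
  assert (P2 := is_series_mult_pos _ _ _ _ HM HM HMn HMn).
  assert (P3 := is_series_mult_pos _ _ _ _ HM HS HMn Hnn).
  apply (is_series_scal_R (/ 2)) in P3.
  assert (P := is_series_minus_R _ _ _ _ (is_series_minus_R _ _ _ _ P1 P2) P3).
  set (L := Sv * (y ^ 2 * Sv) - y ^ 2 * Uv * (y ^ 2 * Uv) - / 2 * (y ^ 2 * Uv * Sv)) in P.
  set (d := fun n => sum_f_R0 (fun j => a j * a (n - j)%nat * Fk nu (INR j) (INR (n - j))) n).
  assert (Pd : is_series d L).
  { eapply is_series_ext; [| exact P]. intros n. cbv beta. unfold d.
    match goal with |- ?x = ?z => change (@eq R x z) end.
    rewrite scal_sum, <- !minus_sum. apply sum_eq. intros j Hj. unfold Fk. match goal with |- ?x = ?z => change (@eq R x z) end. field. }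
  assert (HL : 0 < L).
  { assert (Hd : forall n, 0 <= d n) by (intros n; apply (dn_nonneg nu y a Hnu Ha Hrec)).
    assert (H1 := series_ge_partial d L 1 Hd Pd).
    assert (H0 := Hd 0%nat).
    assert (Hd1 : 0 < d 1%nat).
    { unfold d. simpl. unfold Fk. pose proof (Ha 0%nat). pose proof (Ha 1%nat).
      replace (1 - 0)%nat with 1%nat by reflexivity. simpl. assert (0 < a 0%nat * a 1%nat) by (apply Rmult_lt_0_compat; auto). nra. }
    simpl in H1. lra. }
  assert (HS0 : 0 < Sv).
  { pose proof (series_ge_partial a Sv 0 Hnn HS) as H. simpl in H. pose proof (Ha 0%nat). lra. }
  exists Sv, Uv. repeat split; auto.
  unfold L in HL. assert (0 < y ^ 2) by (apply pow_lt; auto). nra.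
Qed.

Lemma Gamma_succ s : 1 <= s -> Gamma (s + 1) = s * Gamma s.
Proof.
  intros Hs. destruct (Gamma_ex s Hs) as [l Hl].
  assert (H2 := Gamma_rec s l Hs Hl).
  unfold Gamma. change (fun t => Rpower t (s + 1 - 1) * exp (- t)) with (gf (s + 1)).
  change (fun t => Rpower t (s - 1) * exp (- t)) with (gf s).
  rewrite (is_RInt_gen_unique _ _ Hl), (is_RInt_gen_unique _ _ H2). reflexivity.
Qed.

Lemma Gk_rec nu k : 0 <= nu ->
  Gamma (INR (S k) + nu + 1) = (INR k + nu + 1) * Gamma (INR k + nu + 1).
Proof.
  intros Hnu. rewrite <- Gamma_succ by (pose proof (pos_INR k); lra).
  f_equal. rewrite S_INR. ring.
Qed.

Lemma Series_zero (u : nat -> R) : (forall n, u n = 0) -> Series u = 0.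
Proof.
  intros H. rewrite (Series_ext _ (fun n => 0 * 1)) by (intros; rewrite H; ring).
  rewrite Series_scal_l. ring.
Qed.

Theorem mainTheorem4 (nu K r : R) :
  0 <= nu -> nu + 1 < K -> 0 < r -> r = Psi nu (2 * K * r) ->
  r < sqrt (1 - 1 / (2 * K)).
Proof.
  intros Hnu HK Hr Heq.
  assert (HK0 : 0 < K) by lra.
  set (y := K * r). assert (Hy : 0 < y) by (unfold y; nra).
  assert (Hx : 2 * K * r / 2 = y) by (unfold y; field).
  set (G := fun k : nat => Gamma (INR k + nu + 1)).
  assert (HGr : forall k, G (S k) = (INR k + nu + 1) * G k) by (intros; apply Gk_rec; auto).
  destruct (Req_dec (G 0%nat) 0) as [HG0|HG0].
  -
    assert (HGz : forall k, G k = 0).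
    { induction k. auto. rewrite HGr, IHk. ring. }
    assert (HI : BesselI nu (2 * K * r) = 0).
    { unfold BesselI. apply Series_zero. intros n. fold (G n). rewrite HGz, Rmult_0_r.
      unfold Rdiv. rewrite Rinv_0. ring. }
    unfold Psi in Heq. rewrite HI in Heq. unfold Rdiv in Heq. rewrite Rinv_0, Rmult_0_r in Heq. lra.
  - set (P := fun k => G k / G 0%nat).
    assert (HP0 : P 0%nat = 1) by (unfold P; field; auto).
    assert (HPr : forall k, P (S k) = (INR k + nu + 1) * P k) by (intros; unfold P; rewrite HGr; field; auto).
    assert (HPp : forall k, 0 < P k).
    { induction k. rewrite HP0; lra. rewrite HPr. apply Rmult_lt_0_compat; auto.
      pose proof (pos_INR k); lra. }
    set (a := fun k => Rpower y (2 * INR k + nu) / (INR (fact k) * P k)).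
    assert (Ha : forall k, 0 < a k).
    { intros k. unfold a. apply Rdiv_lt_0_compat. apply Rpower_pos.
      apply Rmult_lt_0_compat; auto. apply lt_0_INR, lt_O_fact. }
    assert (Hrec : forall k, a (S k) * ((INR k + 1) * (INR k + nu + 1)) = y ^ 2 * a k).
    { intros k. unfold a. rewrite HPr, fact_simpl, mult_INR.
      assert (E : Rpower y (2 * INR (S k) + nu) = Rpower y (2 * INR k + nu) * y ^ 2).
      { rewrite <- (Rpower_pow 2 y) by lra. rewrite <- Rpower_plus. f_equal. rewrite S_INR. simpl. ring. }
      rewrite E. rewrite S_INR.
      assert (0 < INR (fact k)) by apply lt_0_INR, lt_O_fact.
      specialize (HPp k). pose proof (pos_INR k).
      field. repeat split; apply Rgt_not_eq; lra. }
    destruct (main_ineq nu y a Hnu Hy Ha Hrec) as [Sv [Uv [HS [HU [HS0 Hineq]]]]].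
    assert (HB0 : BesselI nu (2 * K * r) = / G 0%nat * Sv).
    { unfold BesselI. rewrite Hx. rewrite <- (is_series_unique _ _ HS), <- Series_scal_l.
      apply Series_ext. intros n. fold (G n). unfold a.
      replace (G n) with (P n * G 0%nat) by (unfold P; field; auto).
      assert (0 < INR (fact n)) by apply lt_0_INR, lt_O_fact. specialize (HPp n).
      field. repeat split; first [exact HG0 | apply Rgt_not_eq; nra]. }
    assert (HB1 : BesselI (nu + 1) (2 * K * r) = / G 0%nat * (y * Uv)).
    { unfold BesselI. rewrite Hx. rewrite <- (is_series_unique _ _ HU), <- !Series_scal_l.
      apply Series_ext. intros n.
      replace (INR n + (nu + 1) + 1) with (INR (S n) + nu + 1) by (rewrite S_INR; ring).
      fold (G (S n)). rewrite HGr. unfold a.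
      replace (G n) with (P n * G 0%nat) by (unfold P; field; auto).
      replace (2 * INR n + (nu + 1)) with ((2 * INR n + nu) + 1) by ring.
      rewrite Rpower_plus, Rpower_1 by lra.
      assert (0 < INR (fact n)) by apply lt_0_INR, lt_O_fact. specialize (HPp n).
      pose proof (pos_INR n).
      field. repeat split; first [exact HG0 | apply Rgt_not_eq; nra]. }
    unfold Psi in Heq. rewrite HB0, HB1 in Heq.
    assert (Hr2 : r = y * Uv / Sv).
    { rewrite Heq. field. split; auto. apply Rgt_not_eq; auto. }
    assert (HSU : Sv = K * Uv).
    { unfold y in Hr2. apply (Rmult_eq_compat_r Sv) in Hr2.
      unfold Rdiv in Hr2. rewrite Rmult_assoc, Rinv_l, Rmult_1_r in Hr2 by lra.
      apply (Rmult_eq_reg_l r); [|lra]. rewrite Hr2. ring. }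
    assert (HU0 : 0 < Uv) by (rewrite HSU in HS0; nra).
    rewrite HSU in Hineq. unfold y in Hineq.
    assert (Hr2' : r ^ 2 < 1 - 1 / (2 * K)).
    { assert (0 < K ^ 2 * Uv ^ 2) by (apply Rmult_lt_0_compat; apply pow_lt; lra).
      apply (Rmult_lt_reg_r (K ^ 2 * Uv ^ 2)); auto.
      replace ((1 - 1 / (2 * K)) * (K ^ 2 * Uv ^ 2)) with (K ^ 2 * Uv ^ 2 - Uv * (K * Uv) / 2) by (field; lra).
      nra. }
    rewrite <- (sqrt_pow2 r) by lra. apply sqrt_lt_1_alt. split; auto. apply pow2_ge_0.
Qed.
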